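(* Let $(Q,\mathcal Q)$, $(\Delta,\mathcal D)$ be measurable spaces, $f:Q\to Q$ and $g:Q\to\Delta$ measurable, and let $T$ be the generator with $T(x,\cdot)=\delta_{(f(x),g(f(x)))}$ (i.e. $T(x,A\times B)=1$ if $f(x)\in A$ and $g(f(x))\in B$, and $0$ otherwise). Then for $x_1,x_2\in Q$ the following are equivalent: (i) $G_T(\delta_{x_1})=G_T(\delta_{x_2})$; (ii) $T(x_1,C)=T(x_2,C)$ for all $C\in\sigma_Q(T)\otimes\mathcal D$.
   Context: A generator $[(Q,\mathcal Q),T,(\Delta,\mathcal D)]$ consists of measurable spaces $(Q,\mathcal Q)$ and $(\Delta,\mathcal D)$ and a Markov transition kernel $T$ from $(Q,\mathcal Q)$ to $(Q\times\Delta,\mathcal Q\otimes\mathcal D)$. For a probability measure $\mu$ on $(Q,\mathcal Q)$, $G_T(\mu)$ is the unique probability measure on $(\Delta^{\mathbb N},\mathcal D^{\mathbb N})$ whose finite-dimensional marginals are $P_n^{\mu,T}(B_1\times\cdots\times B_n):=\int_Q\int_{Q\times B_1}\cdots\int_{Q\times B_n}T(x_{n-1},d(x_n,y_n))\cdots T(x_0,d(x_1,y_1))\,\mu(dx_0)$; $\delta_x$ is the Dirac measure at $x$. $\sigma_Q(T)$ denotes the smallest $\sigma$-subalgebra $\mathcal A$ of $\mathcal Q$ such that for every $C\in\mathcal A\otimes\mathcal D$ the function $x\mapsto T(x,C)$ is $\mathcal A$-measurable. *)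

(* Defs.v *)
From HB Require Import structures.
From mathcomp Require Import all_boot all_order all_algebra.
From mathcomp Require Import all_classical all_reals all_analysis measurable_realfun.
Set Implicit Arguments. Unset Strict Implicit. Unset Printing Implicit Defensive.
Import Order.TTheory GRing.Theory Num.Theory.
Local Open Scope classical_set_scope.
Local Open Scope ring_scope.
Local Open Scope ereal_scope.

Section generators.
Context {d1 d2 : measure_display} {Q : measurableType d1} {D : measurableType d2}
  {R : realType}.

Definition sub_sigma (A : set (set Q)) : Prop :=
  sigma_algebra setT A /\ A `<=` measurable.

Definition prod_sigma (A : set (set Q)) : set (set (Q * D)) :=
  <<s [set C | exists A1 B, A A1 /\ measurable B /\ C = A1 `*` B] >>.

Definition kernel_meas_wrt (A : set (set Q)) (T : Q -> set (Q * D) -> \bar R) :=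
  forall C, prod_sigma A C ->
  forall B : set (\bar R), measurable B -> A ((fun x => T x C) @^-1` B).

Definition sigmaQ (T : Q -> set (Q * D) -> \bar R) : set (set Q) :=
  fun S => forall A, sub_sigma A -> kernel_meas_wrt A T -> A S.

(* the iterated integral
   \int_{Q x B_1} ... \int_{Q x B_n} 1 T(x_{n-1}, d(x_n,y_n)) ... T(x_0, d(x_1,y_1)) *)
Fixpoint iterT (T : R.-ker Q ~> (Q * D)%type) (Bs : seq (set D)) (x : Q)
  : \bar R :=
  match Bs with
  | [::] => 1
  | B :: Bs' => \int[T x]_(z in [set: Q] `*` B) iterT T Bs' z.1
  end.

Definition marginal (T : R.-ker Q ~> (Q * D)%type)
  (mu : {measure set Q -> \bar R}) (Bs : seq (set D)) : \bar R :=
  \int[mu]_x iterT T Bs x.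

(* measurable rectangle B_1 x ... x B_n x D x D x ... in D^N
   (coordinate i of the sequence is y_{i+1}) *)
Definition rect (Bs : seq (set D)) : set (nat -> D) :=
  [set w | forall i, (i < size Bs)%N -> nth set0 Bs i (w i)].

Definition meas_seq (Bs : seq (set D)) : Prop :=
  forall i, (i < size Bs)%N -> measurable (nth set0 Bs i).

Definition cylinders : set (set (nat -> D)) :=
  [set S | exists Bs, meas_seq Bs /\ S = rect Bs].

Definition seqSpace := g_sigma_algebraType cylinders.

Definition is_GT (T : R.-ker Q ~> (Q * D)%type) (mu : {measure set Q -> \bar R})
  (P : probability seqSpace R) : Prop :=
  forall Bs, meas_seq Bs -> P (rect Bs) = marginal T mu Bs.

End generators.

Lemma det_meas {d1 d2 : measure_display} {Q : measurableType d1}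
  {D : measurableType d2} (f : Q -> Q) (g : Q -> D)
  (mf : measurable_fun setT f) (mg : measurable_fun setT g) :
  measurable_fun setT (fun x => (f x, g (f x))).
Proof.
apply: measurable_fun_pair => //.
exact: measurableT_comp.
Qed.

Definition detT {d1 d2 : measure_display} {Q : measurableType d1}
  {D : measurableType d2} (R : realType) (f : Q -> Q) (g : Q -> D)
  (mf : measurable_fun setT f) (mg : measurable_fun setT g)
  : R.-pker Q ~> (Q * D)%type :=
  kdirac (det_meas mf mg).

(* Main.v *)
Require Import Defs.
From HB Require Import structures.
From mathcomp Require Import all_boot all_order all_algebra.
From mathcomp Require Import all_classical all_reals all_analysis measurable_realfun.
Import Order.TTheory GRing.Theory Num.Theory.
Local Open Scope classical_set_scope.
Local Open Scope ereal_scope.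

Section S.
Context (d1 d2 : measure_display) (Q : measurableType d1)
  (D : measurableType d2) (R : realType) (f : Q -> Q) (g : Q -> D)
  (mf : measurable_fun setT f) (mg : measurable_fun setT g).

Let T := detT R mf mg.

Lemma TE x C : T x C = ((f x, g (f x)) \in C)%:R%:E.
Proof. by rewrite /T /detT /kdirac /= diracE. Qed.

Fixpoint good (Bs : seq (set D)) : set Q :=
  match Bs with
  | [::] => setT
  | B :: Bs' => [set x | B (g (f x)) /\ good Bs' (f x)]
  end.

Lemma good_meas Bs : meas_seq Bs -> measurable (good Bs).
Proof.
elim: Bs => [|B Bs IH] mBs /=; first exact: measurableT.
have mB : measurable B by exact: (mBs 0%N).
have mBs' : meas_seq Bs by move=> i Hi; exact: (mBs i.+1).
have -> : [set x | B (g (f x)) /\ good Bs (f x)] =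
  (g \o f) @^-1` B `&` f @^-1` good Bs by [].
apply: measurableI.
  by rewrite -[X in measurable X]setTI; apply: (measurableT_comp mg mf).
rewrite -[X in measurable X]setTI; apply: mf => //.
exact (IH mBs').
Qed.

Lemma iterT_good Bs : meas_seq Bs -> forall x,
  iterT T Bs x = (\1_(good Bs) x)%:E.
Proof.
elim: Bs => [|B Bs IH] mBs x /=; first by rewrite indicE mem_set.
have mB : measurable B by exact: (mBs 0%N).
have mBs' : meas_seq Bs by move=> i Hi; exact: (mBs i.+1).
have mg' := good_meas Bs mBs'.
rewrite (eq_integral (fun z => (\1_(good Bs) z.1)%:E)); last first.
  by move=> z _; rewrite IH.
have mfun : measurable_fun ([set: Q] `*` B) (fun z : Q * D => (\1_(good Bs) z.1 : R)%:E).
  apply: measurable_funTS.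
  change (measurable_fun setT (EFin \o (fun z : Q * D => (\1_(good Bs) z.1 : R)%R))); apply/measurable_EFinP.
  by apply: measurableT_comp => //; exact: measurable_indic.
change (\int[@dirac _ _ (f x, g (f x)) R]_(z in [set: Q] `*` B) (\1_(good Bs) z.1)%:E = (\1_(good (B :: Bs)) x)%:E).
rewrite integral_dirac //; last exact: measurableX.
rewrite /= /dirac /= !indicE -EFinM; congr EFin.
have [HB|HB] := pselect (B (g (f x))); have [HG|HG] := pselect (good Bs (f x)).
- rewrite (mem_set (_ : ([set: Q] `*` B) (f x, g (f x)))) //.
  rewrite (mem_set (_ : good Bs (f x))) //.
  by rewrite (mem_set (_ : [set x0 | B (g (f x0)) /\ good Bs (f x0)] x)) // GRing.mulr1.
- rewrite (memNset (_ : ~ good Bs (f x))) //.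
  by rewrite (memNset (_ : ~ [set x0 | B (g (f x0)) /\ good Bs (f x0)] x)) ?GRing.mulr0 //= => -[].
- rewrite (memNset (_ : ~ ([set: Q] `*` B) (f x, g (f x)))) ?GRing.mul0r; last by move=> [].
  by rewrite (memNset (_ : ~ [set x0 | B (g (f x0)) /\ good Bs (f x0)] x)) //= => -[].
- rewrite (memNset (_ : ~ ([set: Q] `*` B) (f x, g (f x)))) ?GRing.mul0r; last by move=> [].
  by rewrite (memNset (_ : ~ [set x0 | B (g (f x0)) /\ good Bs (f x0)] x)) //= => -[].
Qed.

Lemma marginal_good Bs x : meas_seq Bs ->
  marginal T (@dirac _ Q x R) Bs = (\1_(good Bs) x)%:E.
Proof.
move=> mBs; rewrite /marginal.
rewrite (eq_integral (fun z => (\1_(good Bs) z)%:E)); last by move=> z _; rewrite iterT_good.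
rewrite integral_dirac ?diracT ?mul1e //.
change (measurable_fun setT (EFin \o (fun z => (\1_(good Bs) z : R)%R))); apply/measurable_EFinP.
exact: measurable_indic (good_meas Bs mBs).
Qed.

Lemma bool_EFin_inj (b1 b2 : bool) :
  (b1%:R%:E : \bar R) = b2%:R%:E -> b1 = b2.
Proof.
case: b1; case: b2 => //= [] [] /eqP; by rewrite ?GRing.oner_eq0 // eq_sym GRing.oner_eq0.
Qed.

Lemma indic_iff (S : set Q) x y : (\1_S x : R)%:E = (\1_S y : R)%:E -> (S x <-> S y).
Proof.
rewrite !indicE => /bool_EFin_inj H; split => Hs.
  by apply/set_mem; rewrite -H; apply/mem_set.
by apply/set_mem; rewrite H; apply/mem_set.
Qed.

Lemma meas_seq_cons (B : set D) Bs : measurable B -> meas_seq Bs -> meas_seq (B :: Bs).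
Proof. by move=> mB mBs [|i] //= Hi; exact: mBs. Qed.

Lemma good_nseq k B x : good (nseq k setT ++ [:: B]) x <-> B (g (iter k.+1 f x)).
Proof.
elim: k x => [|k IH] x /=; first by split => [[]|].
rewrite IH -iterSr; by split => [[]|].
Qed.

Lemma meas_nseq k (B : set D) : measurable B -> meas_seq (nseq k setT ++ [:: B]).
Proof.
move=> mB; elim: k => [|k IH] /=.
  by apply: meas_seq_cons => // -[].
by apply: meas_seq_cons.
Qed.

Lemma good_sigmaQ Bs : meas_seq Bs -> sigmaQ (fun x A => T x A) (good Bs).
Proof.
move=> mBs A [[A0 AC AU] Ameas] Hk.
elim: Bs mBs => [|B Bs IH] mBs /=.
  by rewrite -(setD0 setT); apply: AC.
have mB : measurable B by exact: (mBs 0%N).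
have mBs' : meas_seq Bs by move=> i Hi; exact: (mBs i.+1).
have HC : prod_sigma A (good Bs `*` B).
  by apply: sub_gen_smallest; exists (good Bs), B; split => //; exact: IH.
have := Hk _ HC [set 1] (emeasurable_set1 _).
congr A; apply/seteqP; split => y /=.
  rewrite TE => /(@bool_EFin_inj _ true) /set_mem [? ?]; by split.
move=> [H1 H2]; rewrite TE mem_set //.
Qed.

Definition wseq (x : Q) : nat -> D := fun i => g (iter i.+1 f x).

Lemma rect_good Bs x : rect Bs (wseq x) <-> good Bs x.
Proof.
elim: Bs x => [|B Bs IH] x /=; first by split => // _ i.
split.
  move=> H; split; first exact: (H 0%N).
  apply/IH => i Hi; have := H i.+1 Hi; by rewrite /= /wseq iterSr.
move=> [HB HG] [|i] Hi //=.
move/IH: HG => HG; have := HG i Hi; by rewrite /wseq -iterSr.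
Qed.

Definition eqv (y y' : Q) := forall k (B : set D), measurable B ->
  (B (g (iter k f y)) <-> B (g (iter k f y'))).

Definition indist (b b' : D) := forall B : set D, measurable B -> (B b <-> B b').

Lemma prod_inv (A : set (set Q)) :
  (forall S, A S -> forall y y', eqv y y' -> (S y <-> S y')) ->
  forall C, prod_sigma A C -> forall a a' b b', eqv a a' -> indist b b' ->
  (C (a, b) <-> C (a', b')).
Proof.
move=> HA C HC.
pose I := [set C : set (Q * D) | forall a a' b b', eqv a a' -> indist b b' ->
  (C (a, b) <-> C (a', b'))].
suff : prod_sigma A `<=` I by move/(_ C HC).
apply: smallest_sub.
  split.
  - by move=> a a' b b' _ _.
  - move=> S HS a a' b b' He Hi /=.
    have := HS a a' b b' He Hi; by move=> HH; split => -[_ H]; split => // H'; apply: H; apply/HH.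
  - move=> F HF a a' b b' He Hi; split => -[n _ Hn]; exists n => //.
      by apply/(HF n a a' b b' He Hi).
    by apply/(HF n a a' b b' He Hi).
move=> S [A1 [B [HA1 [mB ->]]]] a a' b b' He Hi /=.
have := HA _ HA1 _ _ He; have := Hi B mB; tauto.
Qed.

Arguments prod_inv {A} HA {C} HC {a a' b b'}.

Lemma eqv_f y y' : eqv y y' -> eqv (f y) (f y').
Proof. by move=> He k B mB; rewrite -!iterSr; exact: He. Qed.

Arguments eqv_f {y y'}.

Lemma eqv_indist y y' : eqv y y' -> indist (g (f y)) (g (f y')).
Proof. by move=> He B mB; exact: (He 1%N B mB). Qed.

Arguments eqv_indist {y y'}.

Lemma T_inv (A : set (set Q)) :
  (forall S, A S -> forall y y', eqv y y' -> (S y <-> S y')) ->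
  forall C, prod_sigma A C -> forall y y', eqv y y' -> T y C = T y' C.
Proof.
move=> HA C HC y y' e; rewrite !TE.
have := prod_inv HA HC (eqv_f e) (eqv_indist e) => E.
suff -> : ((f y, g (f y)) \in C) = ((f y', g (f y')) \in C) by [].
by apply/idP/idP => /set_mem h; apply/mem_set; apply/E.
Qed.

Arguments T_inv {A} HA {C} HC {y y'}.

Definition invA : set (set Q) :=
  [set S | measurable S /\ forall y y', eqv y y' -> (S y <-> S y')].

Lemma invA_sub : sub_sigma invA.
Proof.
split; last by move=> S [].
split.
- by split; [exact: measurable0 | move=> y y' _].
- move=> S [mS HS]; split; first exact: measurableD.
  move=> y y' e; have := HS y y' e => HH.
  by split => -[_ h]; split => // h'; apply: h; apply/HH.
- move=> F HF; split; first by apply: bigcupT_measurable => n; exact: (HF n).1.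
  move=> y y' e; split => -[n _ h]; exists n => //; by apply/((HF n).2 _ _ e).
Qed.

Lemma prod_sigma_meas (A : set (set Q)) : A `<=` measurable ->
  prod_sigma (D:=D) A `<=` measurable.
Proof.
move=> HA; apply: smallest_sub; first exact: sigma_algebra_measurable.
move=> S [A1 [B [HA1 [mB ->]]]]; apply: measurableX => //; exact: HA.
Qed.

Arguments prod_sigma_meas {A} _ {t}.

Lemma invA_ker : kernel_meas_wrt invA (fun x A => T x A).
Proof.
move=> C HC B mB; split.
  have mC := prod_sigma_meas (fun S (h : invA S) => h.1) HC.
  have mk := measurable_kernel T C mC. rewrite -[X in measurable X]setTI. exact: (mk measurableT B mB).
move=> y y' e /=.
by rewrite (T_inv (fun S (h : invA S) => h.2) HC e).
Qed.

Lemma dir_bwd x1 x2 :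
  (forall C, prod_sigma (sigmaQ (fun x A => T x A)) C -> T x1 C = T x2 C) ->
  exists P : probability (@seqSpace _ D) R,
      is_GT T (@dirac _ Q x1 R) P /\ is_GT T (@dirac _ Q x2 R) P.
Proof.
move=> H.
have Hg : forall Bs, meas_seq Bs -> (good Bs x1 <-> good Bs x2).
  case=> [|B Bs] mBs //=.
  have mBs' : meas_seq Bs by move=> i Hi; exact: (mBs i.+1).
  have mB : measurable B by exact: (mBs 0%N).
  have HC : prod_sigma (sigmaQ (fun x A => T x A)) (good Bs `*` B).
    apply: sub_gen_smallest; exists (good Bs), B; split => //.
    exact: good_sigmaQ.
  have := H _ HC; rewrite !TE => /bool_EFin_inj E.
  split => -[h1 h2].
    have : (f x2, g (f x2)) \in good Bs `*` B by rewrite -E; apply/mem_set.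
    by move/set_mem => [? ?]; split.
  have : (f x1, g (f x1)) \in good Bs `*` B by rewrite E; apply/mem_set.
  by move/set_mem => [? ?]; split.
exists (@dirac _ (@seqSpace _ D) (wseq x1) R).
split => Bs mBs; rewrite marginal_good // /= /dirac !indicE.
  suff -> : (wseq x1 \in rect Bs) = (x1 \in good Bs) by [].
  by apply/idP/idP => /set_mem h; apply/mem_set; apply/rect_good.
suff -> : (wseq x1 \in rect Bs) = (x2 \in good Bs) by [].
apply/idP/idP => /set_mem h; apply/mem_set.
  by apply/(Hg _ mBs); apply/rect_good.
by apply/rect_good; apply/(Hg _ mBs).
Qed.

Lemma dir_fwd x1 x2 :
  (exists P : probability (@seqSpace _ D) R,
      is_GT T (@dirac _ Q x1 R) P /\ is_GT T (@dirac _ Q x2 R) P) ->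
  (forall C, prod_sigma (sigmaQ (fun x A => T x A)) C -> T x1 C = T x2 C).
Proof.
move=> [P [H1 H2]].
have Hg : forall Bs, meas_seq Bs -> (good Bs x1 <-> good Bs x2).
  move=> Bs mBs; have E := etrans (esym (H1 Bs mBs)) (H2 Bs mBs).
  move: E; rewrite !marginal_good // => E; exact: indic_iff E.
have He : eqv (f x1) (f x2).
  move=> k B mB; rewrite -!iterSr; split => h.
    apply/(good_nseq k B x2).1; apply/(Hg _ (meas_nseq k B mB)).1.
    exact/(good_nseq k B x1).2.
  apply/(good_nseq k B x1).1; apply/(Hg _ (meas_nseq k B mB)).2.
  exact/(good_nseq k B x2).2.
have Hi : indist (g (f x1)) (g (f x2)) by move=> B mB; exact: (He 0%N B mB).
have HQA : sigmaQ (fun x A => T x A) `<=` invA.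
  by move=> S HS; exact: HS invA invA_sub invA_ker.
move=> C HC; rewrite !TE.
have E := prod_inv (fun S HS => (HQA S HS).2) HC He Hi.
suff -> : ((f x1, g (f x1)) \in C) = ((f x2, g (f x2)) \in C) by [].
by apply/idP/idP => /set_mem h; apply/mem_set; apply/E.
Qed.
End S.

Theorem corollary4p7 (d1 d2 : measure_display) (Q : measurableType d1)
  (D : measurableType d2) (R : realType) (f : Q -> Q) (g : Q -> D)
  (mf : measurable_fun setT f) (mg : measurable_fun setT g) (x1 x2 : Q) :
  let T := detT R mf mg in
  (exists P : probability (@seqSpace _ D) R,
      is_GT T (@dirac _ Q x1 R) P /\ is_GT T (@dirac _ Q x2 R) P)
  <->
  (forall C, prod_sigma (sigmaQ (fun x A => T x A)) C -> T x1 C = T x2 C).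
Proof.
move=> T; split; [exact: dir_fwd | exact: dir_bwd].
Qed.
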